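(* A Cantor set (with any compatible metric) admits a continuous selfmap which is generically chaotic but not generically $\varepsilon$-chaotic for any $\varepsilon>0$.
   Context: For continuous $f$ on a compact metric space $(X,d)$: $(x,y)$ is a Li-Yorke pair if $\liminf_n d(f^n(x),f^n(y))=0<\limsup_n d(f^n(x),f^n(y))$, and an $\varepsilon$-scrambled pair if $\liminf_n d(f^n(x),f^n(y))=0$ and $\limsup_n d(f^n(x),f^n(y))>\varepsilon$; $f$ is generically chaotic (resp. generically $\varepsilon$-chaotic) if the set of Li-Yorke (resp. $\varepsilon$-scrambled) pairs is residual in $X^2$. *)

(* Defs.v *)
From HB Require Import structures.
From mathcomp Require Import all_boot all_order all_algebra.
From mathcomp Require Import all_classical all_reals all_analysis.
Set Implicit Arguments. Unset Strict Implicit. Unset Printing Implicit Defensive.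
Import Order.TTheory GRing.Theory Num.Theory.
Local Open Scope classical_set_scope.
Local Open Scope ring_scope.

Definition homeomorphic (S T : topologicalType) : Prop :=
  exists (f : S -> T) (g : T -> S),
    cancel f g /\ cancel g f /\ continuous f /\ continuous g.

Definition residual (T : topologicalType) (A : set T) : Prop :=
  exists U : nat -> set T,
    (forall n, open (U n) /\ dense (U n)) /\ \bigcap_n U n `<=` A.

Definition orbit_dist {R : realType} {T : metricType R} (f : T -> T) (x y : T)
  : nat -> \bar R := fun n => (mdist (iter n f x) (iter n f y))%:E.

Definition LiYorke_pair {R : realType} {T : metricType R} (f : T -> T) (x y : T)
  : Prop :=
  limn_einf (orbit_dist f x y) = 0%E /\ (0 < limn_esup (orbit_dist f x y))%E.

Definition scrambled_pair {R : realType} {T : metricType R} (eps : R)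
  (f : T -> T) (x y : T) : Prop :=
  limn_einf (orbit_dist f x y) = 0%E /\ (eps%:E < limn_esup (orbit_dist f x y))%E.

Definition generically_chaotic {R : realType} {T : metricType R} (f : T -> T)
  : Prop := residual [set p : T * T | LiYorke_pair f p.1 p.2].

Definition generically_eps_chaotic {R : realType} {T : metricType R} (eps : R)
  (f : T -> T) : Prop := residual [set p : T * T | scrambled_pair eps f p.1 p.2].

(* Main.v *)
Require Import Defs.
From HB Require Import structures.
From mathcomp Require Import all_boot all_order all_algebra.
From mathcomp Require Import all_classical all_reals all_analysis.
From mathcomp Require Import zify.
From Stdlib Require Import Lia.
Import Order.TTheory GRing.Theory Num.Theory.
Local Open Scope classical_set_scope.
Local Open Scope ring_scope.

Section Streams.
Local Open Scope nat_scope.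

Definition strm := nat -> bool.
Definition zs : strm := fun _ => false.
Definition ones : strm := fun _ => true.
Definition prep (s : seq bool) (w : strm) : strm :=
  fun i => if i < size s then nth false s i else w (i - size s).
Definition code (k : nat) : seq bool := rcons (nseq k false) true.
Definition cyl (x : nat -> bool) (M : nat) (y : nat -> bool) : Prop :=
  forall i, (i < M)%N -> y i = x i.

Lemma size_code k : size (code k) = k.+1.
Proof. by rewrite /code size_rcons size_nseq. Qed.

Lemma codeS k : code k.+1 = false :: code k.
Proof. by []. Qed.

Lemma prep_cat s1 s2 w : prep (s1 ++ s2) w = prep s1 (prep s2 w).
Proof.
apply: funext => i; rewrite /prep size_cat nth_cat.
case: (ltnP i (size s1)) => H1.
  by have -> : (i < size s1 + size s2) = true by lia.
case: (ltnP (i - size s1) (size s2)) => H2.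
  by have -> : (i < size s1 + size s2) = true by lia.
have -> : (i < size s1 + size s2) = false by lia.
by rewrite subnDA.
Qed.

Lemma prep_code_lt k w i : i < k -> prep (code k) w i = false.
Proof.
move=> ik; rewrite /prep size_code ltnS ltnW // /code nth_rcons size_nseq ik.
by rewrite nth_nseq ik.
Qed.

Lemma prep_code_k k w : prep (code k) w k = true.
Proof. by rewrite /prep size_code ltnSn /code nth_rcons size_nseq ltnn eqxx. Qed.

Lemma prep_code_gt k w i : prep (code k) w (i + k.+1) = w i.
Proof.
rewrite /prep size_code.
have -> : (i + k.+1 < k.+1) = false by lia.
by rewrite addnK.
Qed.

Definition blk (x : strm) : option (nat * strm) :=
  match pselect (exists i, x i) with
  | left P => Some (ex_minn P, fun i => x (i + (ex_minn P).+1))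
  | right _ => None end.

Lemma blk_code k w : blk (prep (code k) w) = Some (k, w).
Proof.
rewrite /blk; case: pselect => [P|nP]; last first.
  by exfalso; apply: nP; exists k; rewrite prep_code_k.
case: ex_minnP => m Hm Hmin.
have mk : m = k.
  apply/eqP; rewrite eqn_leq Hmin ?prep_code_k //=.
  by rewrite leqNgt; apply/negP => /(@prep_code_lt k w m); rewrite Hm.
subst m; congr Some; congr pair; apply: funext => i.
by rewrite prep_code_gt.
Qed.

Lemma blk_zs : blk zs = None.
Proof. by rewrite /blk; case: pselect => // -[]. Qed.

Lemma dec x : x = zs \/ exists k x1, x = prep (code k) x1.
Proof.
case: (pselect (exists i, x i)) => [P|nP]; last first.
  left; apply: funext => i; rewrite /zs; apply/negP => xi; apply: nP.
  by exists i.
right; case: (ex_minnP P) => m Hm Hmin.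
exists m, (fun i => x (i + m.+1)); apply: funext => i.
rewrite /prep size_code; case: ltnP => H.
  rewrite /code nth_rcons size_nseq; case: ltnP => H2.
    rewrite nth_nseq H2; apply/negP => xi.
    by have := Hmin _ xi; rewrite leqNgt H2.
  have -> : i = m by lia.
  by rewrite eqxx Hm.
by congr x; lia.
Qed.

Definition Xs k j w := prep (code k) (prep (code j) w).

Definition fC (x : strm) : strm :=
  if blk x is Some (k, x1) then
  if blk x1 is Some (j, x2) then
  if blk x2 is Some (a, w) then Xs (maxn k.-1 (j + a)) j w
  else zs else zs else zs.

Lemma fC3 k j a w : fC (Xs k j (prep (code a) w)) = Xs (maxn k.-1 (j + a)) j w.
Proof. by rewrite /fC /Xs !blk_code. Qed.
Lemma fC0 : fC zs = zs.
Proof. by rewrite /fC blk_zs. Qed.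
Lemma fC1 k : fC (prep (code k) zs) = zs.
Proof. by rewrite /fC blk_code blk_zs. Qed.
Lemma fC2 k j : fC (Xs k j zs) = zs.
Proof. by rewrite /fC /Xs !blk_code blk_zs. Qed.

Lemma cyl_zs_code m k w : m <= k -> cyl zs m (prep (code k) w).
Proof. by move=> mk i im; rewrite prep_code_lt //; apply: leq_trans im mk. Qed.

Lemma cyl_zsP m y : cyl zs m y -> y = zs \/ exists k y1, y = prep (code k) y1 /\ m <= k.
Proof.
move=> cy; case: (dec y) => [->|[k [y1 ey]]]; first by left.
subst y.
right; exists k, y1; split => //; rewrite leqNgt; apply/negP => km.
by have := cy _ km; rewrite /zs prep_code_k.
Qed.

Lemma cyl_zs0 m : cyl zs m zs. Proof. by []. Qed.

Lemma cyl_mono x y M M' : M' <= M -> cyl x M y -> cyl x M' y.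
Proof. by move=> MM c i iM; apply: c; apply: leq_trans iM MM. Qed.

Lemma cyl_trans x y z M : cyl x M y -> cyl y M z -> cyl x M z.
Proof. by move=> c1 c2 i iM; rewrite c2 // c1. Qed.

Arguments cyl_mono {x y M M'}.
Arguments cyl_trans {x y z M}.

Lemma cyl_refl x M : cyl x M x. Proof. by []. Qed.

Lemma cyl_prep s w w' M : cyl w M w' -> cyl (prep s w) (size s + M) (prep s w').
Proof.
move=> c i iM; rewrite /prep; case: ltnP => // H; apply: c; lia.
Qed.

Lemma cyl_prep_same s w w' : cyl (prep s w) (size s) (prep s w').
Proof. by move=> i iM; rewrite /prep iM. Qed.

Lemma cyl_prep_inv s w M y : cyl (prep s w) (size s + M) y ->
  exists w', y = prep s w' /\ cyl w M w'.
Proof.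
move=> c; exists (fun i => y (i + size s)); split.
  apply: funext => i; rewrite /prep; case: ltnP => H.
    by rewrite c ?/prep ?H //; lia.
  by rewrite subnK.
move=> i iM; rewrite c; last by lia.
rewrite /prep; have -> : (i + size s < size s) = false by lia.
by rewrite addnK.
Qed.

Lemma fC_low1 k y1 L : L <= k.-1 -> cyl zs L (fC (prep (code k) y1)).
Proof.
move=> Lk; case: (dec y1) => [->|[j [y2 ->]]]; first by rewrite fC1.
case: (dec y2) => [->|[a [w ->]]]; first by rewrite -/(Xs _ _ _) fC2.
rewrite -/(Xs _ _ _) fC3; apply: cyl_zs_code; lia.
Qed.

Lemma fC_low2 k j y2 L : L <= j -> cyl zs L (fC (Xs k j y2)).
Proof.
move=> Lk; case: (dec y2) => [->|[a [w ->]]]; first by rewrite fC2.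
rewrite fC3; apply: cyl_zs_code; lia.
Qed.

Lemma fC_cont x L : exists M, forall y, cyl x M y -> cyl (fC x) L (fC y).
Proof.
case: (dec x) => [->|[k [x1 ->]]].
  exists L.+2 => y /cyl_zsP [->//|[k [y1 [-> Lk]]]].
  by rewrite fC0; apply: fC_low1; lia.
case: (dec x1) => [->|[j [x2 ->]]].
  exists (size (code k) + L) => y /cyl_prep_inv [y1 [-> /cyl_zsP [->|]]].
    by rewrite fC1.
  move=> [j [y2 [-> Lj]]]; rewrite fC1 -/(Xs _ _ _); exact: fC_low2.
case: (dec x2) => [->|[a [w ->]]].
  exists (size (code k) + (size (code j) + L)).
  move=> y /cyl_prep_inv [y1 [-> /cyl_prep_inv [y2 [-> /cyl_zsP [->|]]]]].
    by rewrite -!/(Xs _ _ _) fC2.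
  move=> [a [w [-> La]]]; rewrite -!/(Xs _ _ _) fC2 fC3.
  apply: cyl_zs_code; lia.
exists (size (code k) + (size (code j) + (size (code a) + L))).
move=> y /cyl_prep_inv [y1 [-> /cyl_prep_inv [y2 [-> /cyl_prep_inv [w' [-> cw]]]]]].
rewrite -!/(Xs _ _ _) !fC3 /Xs.
apply: (@cyl_mono _ _ (size (code (maxn k.-1 (j + a))) + (size (code j) + L))); first lia.
by apply: cyl_prep; apply: cyl_prep.
Qed.

Lemma iter_cont n x L : exists M, forall y, cyl x M y -> cyl (iter n fC x) L (iter n fC y).
Proof.
elim: n L => [|n IH] L; first by exists L.
have [M1 H1] := fC_cont (iter n fC x) L.
have [M2 H2] := IH M1.
by exists M2 => y /H2 /H1.
Qed.

Definition pblocks (bs : seq nat) (w : strm) : strm :=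
  foldr (fun a acc => prep (code a) acc) w bs.
Definition lev (k j : nat) (bs : seq nat) : nat :=
  foldl (fun l a => maxn l.-1 (j + a)) k bs.

Lemma pblocks_cat b1 b2 w : pblocks (b1 ++ b2) w = pblocks b1 (pblocks b2 w).
Proof. by rewrite /pblocks foldr_cat. Qed.

Lemma iter_blocks bs k j w :
  iter (size bs) fC (Xs k j (pblocks bs w)) = Xs (lev k j bs) j w.
Proof.
elim: bs k => [|a bs IH] k //.
rewrite -[size (a::bs)]/(size bs).+1 iterSr.
rewrite -[pblocks (a :: bs) w]/(prep (code a) (pblocks bs w)) fC3 IH.
by [].
Qed.

Lemma parse s : exists bs, size bs = (count id s).+1 /\
  forall w, prep (s ++ [:: true]) w = pblocks bs w.
Proof.
elim: s => [|b s [bs [Hs Hw]]]; first by exists [:: 0].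
case: b.
  exists (0 :: bs); split; first by rewrite /= Hs.
  move=> w; rewrite /= -Hw -(prep_cat [:: true]) //.
case: bs Hs Hw => // a bs Hs Hw.
exists (a.+1 :: bs); split; first by rewrite -Hs.
move=> w; rewrite -cat1s -catA prep_cat Hw.
by rewrite /= codeS -[false :: code a]/([:: false] ++ code a) prep_cat.
Qed.

Lemma normalize (x0 : strm) P : exists k j bs, forall w,
  cyl x0 P (Xs k j (pblocks bs w)).
Proof.
have [bs [Hs Hw]] := parse (mkseq x0 P ++ [:: true; true]).
move: Hs Hw; rewrite count_cat /=.
case: bs => [|k [|j bs]] //=; first by lia.
move=> _ Hw; exists k, j, bs => w.
have := Hw w; rewrite /Xs /= => <-.
rewrite -catA /= prep_cat => i iP.
by rewrite /prep size_mkseq iP nth_mkseq.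
Qed.

Lemma lev_rcons k j bs a : lev k j (rcons bs a) = maxn (lev k j bs).-1 (j + a).
Proof. by rewrite /lev -cats1 foldl_cat. Qed.

Lemma lev_cat k j b1 b2 : lev k j (b1 ++ b2) = lev (lev k j b1) j b2.
Proof. by rewrite /lev foldl_cat. Qed.

Lemma lev_decay D l j : lev l j (nseq D.+1 0) = maxn (l - D.+1) j.
Proof.
elim: D l => [|D IH] l; first by rewrite /lev /= addn0; congr maxn; lia.
have -> : lev l j (nseq D.+2 0) = lev (maxn l.-1 (j+0)) j (nseq D.+1 0) by [].
rewrite IH addn0; lia.
Qed.

Definition uJ J := Xs J J ones.
Definition wJ J := Xs J J (prep (code 1) ones).

Lemma Xs_inj {k j w k' j' w'} : Xs k j w = Xs k' j' w' -> [/\ k = k', j = j' & w = w'].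
Proof.
move=> E; have := congr1 blk E; rewrite /Xs !blk_code => -[<- E2].
by have := congr1 blk E2; rewrite !blk_code => -[<- <-].
Qed.

Lemma uJ_wJ J J' : uJ J <> wJ J'.
Proof.
move=> /Xs_inj [_ _ E]; have := congr1 (fun f => f 0) E.
by rewrite /ones /prep size_code.
Qed.

Definition ProxP n (x y : strm) := exists m, n <= m /\
  cyl zs n (iter m fC x) /\ cyl zs n (iter m fC y).

Definition SepP n (x y : strm) := exists K J K' J',
  cyl (Xs K J ones) (K.+1 + J.+1) x /\ cyl (Xs K' J' ones) (K'.+1 + J'.+1) y /\
  exists m, n <= m /\ cyl (uJ J) n (iter m fC x) /\ cyl (wJ J') n (iter m fC y).

Lemma cyl_Xs K J w w' : cyl (Xs K J w) (K.+1 + J.+1) (Xs K J w').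
Proof.
rewrite /Xs -!prep_cat -(size_code K) -(size_code J) -size_cat.
exact: cyl_prep_same.
Qed.

Lemma cyl_XsP {K J w y} : cyl (Xs K J w) (K.+1 + J.+1) y -> exists w', y = Xs K J w'.
Proof.
rewrite /Xs -!prep_cat -(size_code K) -(size_code J) -size_cat -[X in cyl _ X]addn0.
by move=> /cyl_prep_inv [w' [-> _]]; exists w'; rewrite prep_cat.
Qed.

Lemma Prox_open n x y : ProxP n x y ->
  exists M, forall x' y', cyl x M x' -> cyl y M y' -> ProxP n x' y'.
Proof.
move=> [m [nm [c1 c2]]].
have [M1 H1] := iter_cont m x n; have [M2 H2] := iter_cont m y n.
exists (maxn M1 M2) => x' y' cx cy; exists m; split => //; split.
  by apply: cyl_trans c1 (H1 _ (cyl_mono _ cx)); lia.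
by apply: cyl_trans c2 (H2 _ (cyl_mono _ cy)); lia.
Qed.

Lemma Sep_open n x y : SepP n x y ->
  exists M, forall x' y', cyl x M x' -> cyl y M y' -> SepP n x' y'.
Proof.
move=> [K [J [K' [J' [cx0 [cy0 [m [nm [c1 c2]]]]]]]]].
have [M1 H1] := iter_cont m x n; have [M2 H2] := iter_cont m y n.
exists (maxn (maxn M1 M2) (K.+1 + J.+1 + (K'.+1 + J'.+1))) => x' y' cx cy.
exists K, J, K', J'; split.
  by apply: cyl_trans cx0 (cyl_mono _ cx); lia.
split; first by apply: cyl_trans cy0 (cyl_mono _ cy); lia.
exists m; split => //; split.
  by apply: cyl_trans c1 (H1 _ (cyl_mono _ cx)); lia.
by apply: cyl_trans c2 (H2 _ (cyl_mono _ cy)); lia.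
Qed.

Lemma Prox_dense n x0 y0 P : exists x y, cyl x0 P x /\ cyl y0 P y /\ ProxP n x y.
Proof.
have [k [j [bs Hx]]] := normalize x0 P.
have [k' [j' [bs' Hy]]] := normalize y0 P.
set T := size bs + size bs' + n.
pose cx := bs ++ rcons (nseq (T - size bs) 0) n.
pose cy := bs' ++ rcons (nseq (T - size bs') 0) n.
exists (Xs k j (pblocks cx zs)), (Xs k' j' (pblocks cy zs)).
split; first by rewrite pblocks_cat; exact: Hx.
split; first by rewrite pblocks_cat; exact: Hy.
exists T.+1; split; first by lia.
split.
  have -> : T.+1 = size cx by rewrite size_cat size_rcons size_nseq; lia.
  by rewrite iter_blocks; apply: cyl_zs_code; rewrite lev_cat lev_rcons; lia.
have -> : T.+1 = size cy by rewrite size_cat size_rcons size_nseq; lia.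
by rewrite iter_blocks; apply: cyl_zs_code; rewrite lev_cat lev_rcons; lia.
Qed.

Lemma Sep_dense n x0 y0 P : exists x y, cyl x0 P x /\ cyl y0 P y /\ SepP n x y.
Proof.
have [k [j [bs Hx]]] := normalize x0 P.
have [k' [j' [bs' Hy]]] := normalize y0 P.
set T := size bs + size bs' + n + lev k j bs + lev k' j' bs'.
pose cx := bs ++ nseq (T - size bs).+1 0.
pose cy := bs' ++ nseq (T - size bs').+1 0.
exists (Xs k j (pblocks cx ones)), (Xs k' j' (pblocks cy (prep (code 1) ones))).
split; first by rewrite pblocks_cat; exact: Hx.
split; first by rewrite pblocks_cat; exact: Hy.
exists k, j, k', j'; split; first exact: cyl_Xs.
split; first exact: cyl_Xs.
exists T.+1; split; first by lia.
split.
  have -> : T.+1 = size cx by rewrite size_cat size_nseq; lia.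
  rewrite iter_blocks lev_cat lev_decay.
  have -> : maxn (lev k j bs - (T - size bs).+1) j = j by lia.
  exact: cyl_refl.
have -> : T.+1 = size cy by rewrite size_cat size_nseq; lia.
rewrite iter_blocks lev_cat lev_decay.
have -> : maxn (lev k' j' bs' - (T - size bs').+1) j' = j' by lia.
exact: cyl_refl.
Qed.

Lemma Sep_J n x y K J K' J' : SepP n x y ->
  cyl (Xs K J ones) (K.+1 + J.+1) x -> cyl (Xs K' J' ones) (K'.+1 + J'.+1) y ->
  exists m, n <= m /\ cyl (uJ J) n (iter m fC x) /\ cyl (wJ J') n (iter m fC y).
Proof.
move=> [K2 [J2 [K2' [J2' [c1 [c2 H]]]]]] d1 d2.
have [w1 E1] := cyl_XsP c1; have [w2 E2] := cyl_XsP d1.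
have [w3 E3] := cyl_XsP c2; have [w4 E4] := cyl_XsP d2.
have [_ eJ _] := Xs_inj (etrans (esym E1) E2).
have [_ eJ' _] := Xs_inj (etrans (esym E3) E4).
by rewrite -eJ -eJ'.
Qed.

Lemma trap L x : cyl (Xs L L ones) (L.+1 + L.+1) x -> forall m, cyl zs L (iter m fC x).
Proof.
move=> /cyl_XsP [w ->] m.
suff : exists k w', (iter m fC (Xs L L w) = Xs k L w' /\ L <= k) \/ iter m fC (Xs L L w) = zs.
  by move=> [k [w' [[-> Lk]|->]]] //; apply: cyl_zs_code.
elim: m => [|m [k [w' [[E Lk]|E]]]]; first by exists L, w; left.
  rewrite iterS E; case: (dec w') => [->|[a [w2 ->]]].
    by exists 0, zs; right; rewrite fC2.
  by rewrite fC3; exists (maxn k.-1 (L + a)), w2; left; split => //; lia.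
by exists 0, zs; right; rewrite iterS E fC0.
Qed.
End Streams.
Arguments cyl_mono {x y M M'}.
Arguments cyl_trans {x y z M}.

Lemma cyl_nbhs (x : cantor_space) M : nbhs x (cyl x M).
Proof.
elim: M => [|n IH]; first by apply: (@filterS _ _ _ setT); [move=> z _ i; rewrite ltn0|exact: filterT].
have H : nbhs x (proj n @^-1` [set x n]).
  apply: open_nbhs_nbhs; split => //.
  apply: open_comp; [move=> + _; exact: proj_continuous| apply: discrete_open].
apply: filterS (filterI IH H) => z [Hz Hn] i.
rewrite ltnS leq_eqVlt => /predU1P[->|iSn]; first exact: Hn.
exact: Hz.
Qed.

Lemma cvg_cantor (z : nat -> cantor_space) (x : cantor_space) :
  (forall N i, (i < N)%N -> z N i = x i) -> z @ \oo --> x.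
Proof.
move=> Hz; apply/cvg_sup => N U [V] [[W] oW <-] WfN WU.
apply: (filterS WU); rewrite nbhs_simpl; exists N.+1 => // i /= Hi.
by rewrite /= Hz.
Qed.

Lemma nbhs_cyl (x : cantor_space) (A : set cantor_space) :
  nbhs x A -> exists M, cyl x M `<=` A.
Proof.
move=> nA; apply: contrapT => nex.
have H : forall N, exists z, cyl x N z /\ ~ A z.
  move=> N; apply: contrapT => nz; apply: nex; exists N => z cz.
  by apply: contrapT => nAz; apply: nz; exists z.
pose z N := projT1 (cid (H N)).
have zc N : cyl x N (z N) by rewrite /z; case: cid => ? [].
have znA N : ~ A (z N) by rewrite /z; case: cid => ? [].
have /(_ _ nA) : z @ \oo --> x by apply: cvg_cantor => N i iN; exact: zc.
by case=> N _ /(_ N (leqnn N)) /znA.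
Qed.

Lemma fC_continuous : continuous (fC : cantor_space -> cantor_space).
Proof.
move=> x A /nbhs_cyl [L HL].
have [M HM] := fC_cont x L.
by apply: filterS (cyl_nbhs x M) => y /HM /HL.
Qed.

Section Topo.
Context {R : realType} {T : metricType R} (h : T -> cantor_space) (g : cantor_space -> T)
  (hK : cancel h g) (gK : cancel g h) (hc : continuous h) (gc : continuous g).

Lemma nbhs_g (x : cantor_space) (A : set T) : nbhs (g x) A -> exists M, forall y, cyl x M y -> A (g y).
Proof.
move=> nA; have : nbhs x (g @^-1` A) by exact: gc.
by move=> /nbhs_cyl [M HM]; exists M => y /HM.
Qed.

Lemma inside {O : set (T * T)} {p} : open O -> O p ->
  exists M, forall q, cyl (h p.1) M (h q.1) -> cyl (h p.2) M (h q.2) -> O q.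
Proof.
rewrite openE => oO /oO [[A B] [nA nB] AB].
have [M1 H1] : exists M, forall y, cyl (h p.1) M y -> A (g y).
  by apply: nbhs_g; rewrite hK.
have [M2 H2] : exists M, forall y, cyl (h p.2) M y -> B (g y).
  by apply: nbhs_g; rewrite hK.
exists (maxn M1 M2) => -[a b] /= ca cb; apply: AB; split => /=.
  by rewrite -(hK a); apply: H1; apply: cyl_mono ca; lia.
by rewrite -(hK b); apply: H2; apply: cyl_mono cb; lia.
Qed.

Definition CylS x y M := [set q : T * T | cyl x M (h q.1) /\ cyl y M (h q.2)].

Lemma CylS_open x y M : open (CylS x y M).
Proof.
rewrite openE => -[a b] [/= ca cb].
exists (h @^-1` cyl (h a) M, h @^-1` cyl (h b) M).
  by split; apply: hc; apply: cyl_nbhs.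
by move=> [a' b'] [/= c1 c2]; split; [apply: cyl_trans ca c1|apply: cyl_trans cb c2].
Qed.

Lemma CylS_n0 x y M : CylS x y M (g x, g y).
Proof. by split; rewrite /= gK. Qed.

Lemma lift_od (P : strm -> strm -> Prop) :
  (forall x y, P x y -> exists M, forall x' y', cyl x M x' -> cyl y M y' -> P x' y') ->
  (forall x y M, exists x' y', cyl x M x' /\ cyl y M y' /\ P x' y') ->
  open [set p : T * T | P (h p.1) (h p.2)] /\ dense [set p : T * T | P (h p.1) (h p.2)].
Proof.
move=> Hop Hd; split.
  rewrite openE => -[a b] /= Pab; have [M HM] := Hop _ _ Pab.
  exists (h @^-1` cyl (h a) M, h @^-1` cyl (h b) M).
    by split; apply: hc; apply: cyl_nbhs.
  by move=> [a' b'] [/= c1 c2]; apply: HM.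
move=> O [p Op] oO; have [M HM] := inside oO Op.
have [x [y [cx [cy Pxy]]]] := Hd (h p.1) (h p.2) M.
exists (g x, g y); split; first by apply: HM; rewrite /= gK.
by rewrite /= !gK.
Qed.

Lemma denseI (A B : set (T * T)) : open A -> dense A -> open B -> dense B -> dense (A `&` B).
Proof.
move=> oA dA oB dB O O0 oO.
have [p [[Op Ap] Bp]] : (O `&` A) `&` B !=set0.
  by apply: dB; [apply: dA|apply: openI].
by exists p.
Qed.

Lemma baire (U : nat -> set (T * T)) : (forall n, open (U n) /\ dense (U n)) ->
  forall W, open W -> W !=set0 -> (W `&` \bigcap_n U n) !=set0.
Proof.
move=> HU W oW [p Wp].
have step : forall n (st : strm * strm * nat), exists st' : strm * strm * nat,
    (st.2 < st'.2)%N /\ cyl st.1.1 st.2 st'.1.1 /\ cyl st.1.2 st.2 st'.1.2 /\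
    CylS st'.1.1 st'.1.2 st'.2 `<=` U n.
  move=> n [[x y] M] /=.
  have [q [[c1 c2] Uq]] : CylS x y M `&` U n !=set0.
    apply: (HU n).2; [exists (g x, g y); exact: CylS_n0|exact: CylS_open].
  have [M0 HM0] := inside (openI (CylS_open x y M) (HU n).1) (conj (conj c1 c2) Uq).
  exists (h q.1, h q.2, maxn M0 M.+1) => /=; split; first by rewrite leq_max ltnSn orbT.
  split => //; split => // r [d1 d2].
  by have [] := HM0 r (cyl_mono (leq_maxl M0 M.+1) d1) (cyl_mono (leq_maxl M0 M.+1) d2).
have [M0 HM0] := inside oW Wp.
pose stepf n st := projT1 (cid (step n st)).
have stepP n st := projT2 (cid (step n st)).
pose fix sq n := if n is m.+1 then stepf m (sq m) else (h p.1, h p.2, M0).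
have sqS n : sq n.+1 = stepf n (sq n) by [].
have Minc n : (n <= (sq n).2)%N.
  elim: n => [|n IH] //; rewrite sqS; have [H _] := stepP n (sq n); exact: leq_ltn_trans IH H.
have Mmono n m : (n <= m)%N -> ((sq n).2 <= (sq m).2)%N.
  elim: m => [|m IH]; first by rewrite leqn0 => /eqP ->.
  rewrite leq_eqVlt => /predU1P [->//|]; rewrite ltnS => /IH I.
  rewrite sqS; have [H _] := stepP m (sq m); apply: leq_trans I (ltnW H).
have nest n m : (n <= m)%N -> cyl (sq n).1.1 (sq n).2 (sq m).1.1 /\ cyl (sq n).1.2 (sq n).2 (sq m).1.2.
  elim: m => [|m IH]; first by rewrite leqn0 => /eqP ->.
  rewrite leq_eqVlt => /predU1P [->//|]; rewrite ltnS => nm.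
  have [I1 I2] := IH nm.
  rewrite sqS; have [H1 [H2 [H3 _]]] := stepP m (sq m).
  split.
    by apply: cyl_trans I1 (cyl_mono (Mmono _ _ nm) H2).
  by apply: cyl_trans I2 (cyl_mono (Mmono _ _ nm) H3).
pose xi : strm := fun i => (sq i.+1).1.1 i.
pose yi : strm := fun i => (sq i.+1).1.2 i.
have lim n : cyl (sq n).1.1 (sq n).2 xi /\ cyl (sq n).1.2 (sq n).2 yi.
  split => i iM; rewrite /xi /yi; case: (leqP n i.+1) => ni.
  - by have [+ _] := nest _ _ ni; apply.
  - have [+ _] := nest _ _ (ltnW ni); move=> /(_ i (Minc i.+1)) ->. by [].
  - by have [_ +] := nest _ _ ni; apply.
  - have [_ +] := nest _ _ (ltnW ni); move=> /(_ i (Minc i.+1)) ->. by [].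
exists (g xi, g yi); split.
  by have [l1 l2] := lim 0; apply: HM0; rewrite /= gK.
move=> n _; have [_ [_ [_ H]]] := stepP n (sq n); apply: H.
by have [l1 l2] := lim n.+1; rewrite /CylS /= !gK; split.
Qed.
End Topo.

From mathcomp Require Import lra.

Section ER.
Context {R : realType}.
Local Open Scope ereal_scope.

Lemma esup_ge (u : (\bar R)^nat) (r : \bar R) :
  (forall N, exists2 m, (N <= m)%N & r <= u m) -> r <= limn_esup u.
Proof.
move=> H; rewrite limn_esup_lim; apply: lime_ge; first exact: is_cvg_esups.
apply: nearW => N; have [m Nm rm] := H N.
apply: le_trans rm _; apply: ereal_sup_ubound; by exists m.
Qed.

Lemma esup_le (u : (\bar R)^nat) (r : \bar R) :
  (forall m, u m <= r) -> limn_esup u <= r.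
Proof.
move=> H; rewrite limn_esup_lim; apply: lime_le; first exact: is_cvg_esups.
apply: nearW => N; apply: ge_ereal_sup => _ [m _ <-]; exact: H.
Qed.

Lemma einf_0 (u : (\bar R)^nat) :
  (forall m, 0 <= u m) ->
  (forall e : R, (0 < e)%R -> forall N, exists2 m, (N <= m)%N & u m <= e%:E) ->
  limn_einf u = 0.
Proof.
move=> H0 H; rewrite limn_einf_lim; apply/eqP; rewrite eq_le; apply/andP; split.
  apply/lee_addgt0Pr => e e0; rewrite add0e.
  apply: lime_le; first exact: is_cvg_einfs.
  apply: nearW => N; have [m Nm um] := H e e0 N.
  apply: le_trans um; apply: ereal_inf_lbound; by exists m.
apply: lime_ge; first exact: is_cvg_einfs.
apply: nearW => N; apply: le_ereal_inf_tmp => _ [m _ <-]; exact: H0.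
Qed.
End ER.

Lemma close_pair {R : realType} {T : metricType R} (z x y : T) (e : R) :
  mdist z x < e / 2 -> mdist z y < e / 2 -> mdist x y < e.
Proof.
move=> h1 h2; have := metric_triangle x z y; rewrite (metric_sym x z) => h3.
lra.
Qed.

Lemma far_pair {R : realType} {T : metricType R} (u w x y : T) (r : R) :
  r = mdist u w -> mdist u x < r / 3 -> mdist w y < r / 3 -> r / 3 <= mdist x y.
Proof.
move=> -> h1 h2; have := metric_triangle u x w; have := metric_triangle x y w.
rewrite (metric_sym y w) => h3 h4.
lra.
Qed.

Theorem proposition37 (R : realType) (T : metricType R) :
  homeomorphic T cantor_space ->
  exists f : T -> T, continuous f /\ generically_chaotic f /\
    (forall eps : R, 0 < eps -> ~ generically_eps_chaotic eps f).
Proof.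
move=> [h [g [hK [gK [hc gc]]]]].
pose F : T -> T := g \o fC \o h.
have iterF n a : iter n F a = g (iter n fC (h a)).
  elim: n => [|n IH] /=; first by rewrite hK.
  by rewrite IH /F /= gK.
have Fc : continuous F.
  move=> a; apply: continuous_comp; first exact: hc.
  apply: continuous_comp; [exact: fC_continuous|exact: gc].
exists F; split => //; split.
  exists (fun n => [set p : T * T | ProxP n (h p.1) (h p.2)] `&`
                   [set p : T * T | SepP n (h p.1) (h p.2)]).
  split.
    move=> n.
    have [op1 dn1] := lift_od h g hK gK hc gc (ProxP n) (@Prox_open n) (@Prox_dense n).
    have [op2 dn2] := lift_od h g hK gK hc gc (SepP n) (@Sep_open n) (@Sep_dense n).
    by split; [exact: openI|exact: denseI].
  move=> [a b] /= HI.
  have HP n : ProxP n (h a) (h b) by have [] := HI n I.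
  have HS n : SepP n (h a) (h b) by have [] := HI n I.
  have [K [J [K' [J' [c1 [c2 _]]]]]] := HS 0%N.
  split.
    apply: einf_0.
      by move=> m; rewrite lee_fin mdist_ge0.
    move=> e e0 N.
    have [L HL] := nbhs_g g gc zs _ (nbhsx_ballx (g zs) (e / 2) ltac:(lra)).
    have [m [Nm [p1 p2]]] := HP (maxn L N).
    exists m; first by apply: leq_trans Nm; exact: leq_maxr.
    rewrite /orbit_dist !iterF lee_fin; apply/ltW.
    have d1 := HL _ (cyl_mono (leq_maxl L N) p1).
    have d2 := HL _ (cyl_mono (leq_maxl L N) p2).
    rewrite ballEmdist /= in d1; rewrite ballEmdist /= in d2.
    exact: close_pair d1 d2.
  set r := mdist (g (uJ J)) (g (wJ J')).
  have r0 : 0 < r.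
    rewrite /r mdist_gt0; apply/negP => /eqP E; apply: (uJ_wJ J J').
    by rewrite -(gK (uJ J)) E gK.
  have [L1 H1] := nbhs_g g gc (uJ J) _ (nbhsx_ballx (g (uJ J)) (r / 3) ltac:(lra)).
  have [L2 H2] := nbhs_g g gc (wJ J') _ (nbhsx_ballx (g (wJ J')) (r / 3) ltac:(lra)).
  apply: (@lt_le_trans _ _ (r / 3)%:E); first by rewrite lte_fin; lra.
  apply: esup_ge => N.
  have [m [Nm [s1 s2]]] := @Sep_J _ _ _ K J K' J' (HS (maxn (maxn L1 L2) N)) c1 c2.
  exists m; first by apply: leq_trans Nm; exact: leq_maxr.
  rewrite /orbit_dist !iterF lee_fin.
  have d1 := H1 _ (cyl_mono (leq_trans (leq_maxl L1 L2) (leq_maxl _ N)) s1).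
  have d2 := H2 _ (cyl_mono (leq_trans (leq_maxr L1 L2) (leq_maxl _ N)) s2).
  rewrite ballEmdist /= in d1; rewrite ballEmdist /= in d2.
  exact: far_pair d1 d2.
move=> eps e0 [U [HU sub]].
have [L HL] := nbhs_g g gc zs _ (nbhsx_ballx (g zs) (eps / 2) ltac:(lra)).
have [p [[W1 W2] Up]] := baire h g hK gK hc gc U HU _
  (CylS_open h hc (Xs L L ones) (Xs L L ones) (L.+1 + L.+1))
  (ex_intro _ _ (CylS_n0 h g gK (Xs L L ones) (Xs L L ones) (L.+1 + L.+1))).
have [_ Hs] := sub p Up.
have : (limn_esup (orbit_dist F p.1 p.2) <= eps%:E)%E.
  apply: esup_le => m; rewrite /orbit_dist !iterF lee_fin; apply/ltW.
  have d1 := HL _ (@trap L _ W1 m); have d2 := HL _ (@trap L _ W2 m).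
  rewrite ballEmdist /= in d1; rewrite ballEmdist /= in d2.
  exact: close_pair d1 d2.
by rewrite leNgt Hs.
Qed.
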